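(* Let $n \ge 2$, let $\lambda = a_1\omega_1 + a_2\omega_2 + a_3\omega_3$ with $a_1,a_2,a_3 \in \mathbb{Z}_{\ge 0}$, and let $\nu, \eta$ be dominant integral weights of $\mathfrak{sl}(2n,\mathbb{C})$ such that the shapes of $\nu$ and $\eta$ are both contained in the shape of $\lambda$ and the shape of $\eta$ is even. Then $$|\operatorname{LRS}(\lambda/\nu, \eta)| = c^{\lambda}_{\nu,\eta}.$$
   Context: $\omega_1,\dots,\omega_{2n-1}$ are the fundamental weights of $\mathfrak{sl}(2n,\mathbb{C})$. To a dominant weight $\mu = \sum b_i\omega_i$ associate its shape: the Young diagram (left- and top-justified boxes) with $b_i$ columns of length $i$, longer columns to the left. Shape containment means containment of diagrams aligned at their top-left corners. A shape is even if all its columns have even length. $l(\eta)$ denotes the length of the longest column of the shape of $\eta$. For $\nu \subseteq \lambda$, a tableau of skew shape $\lambda/\nu$ is a filling of the boxes of the shape of $\lambda$ not in the shape of $\nu$ with letters from $\{1,\dots,2n\}$; it is semi-standard if rows weakly increase left to right and columns strictly increase downward. Its word is obtained by reading rows from right to left, top row first, ignoring empty boxes. A word $w_1\cdots w_k$ is dominant if for every prefix and every $i$, the number of letters $i$ in the prefix is at least the number of letters $i+1$. $\operatorname{LR}(\lambda/\nu,\eta)$ (Littlewood–Richardson tableaux) is the set of semi-standard tableaux of skew shape $\lambda/\nu$ whose word is dominant and has weight $\eta$ (i.e. for each $i$, the number of entries equal to $i$ is the number of boxes in row $i$ of the shape of $\eta$). $\operatorname{LRS}(\lambda/\nu,\eta)$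 ($n$-symplectic Sundaram tableaux) is the subset of those in which, for each $i \in \{0,1,\dots,\tfrac12 l(\eta)\}$, the letter $2i+1$ does not appear in any row strictly below row $n+i$. The Littlewood–Richardson coefficient $c^\lambda_{\nu,\eta}$ is the multiplicity of the simple module ${\rm L}(\lambda)$ in ${\rm L}(\nu)\otimes{\rm L}(\eta)$ for $\mathfrak{sl}(2n,\mathbb{C})$ (equivalently $|\operatorname{LR}(\lambda/\nu,\eta)|$).
   Formalization: The Littlewood–Richardson coefficient $c^\lambda_{\nu,\eta}$ is defined as |LR(λ/ν,η)|, the number of Littlewood–Richardson tableaux, instead of as the multiplicity of L(λ) in L(ν)⊗L(η) for sl(2n,ℂ). The paper assumes this as well. *)

(* Defs.v *)
From mathcomp Require Import all_boot.
Set Implicit Arguments. Unset Strict Implicit. Unset Printing Implicit Defensive.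

(* A dominant weight mu = sum_i b_i omega_i of sl(2n) is encoded by its
   coefficient function: index j : 'I_(2n-1) stands for omega_(j+1). *)
Definition weight (n : nat) := 'I_(2 * n).-1 -> nat.

(* Length of row r (0-indexed) of the shape of mu: the number of columns
   of length >= r+1, i.e. sum of b_(j+1) over j with r <= j. *)
Definition rowlen (n : nat) (mu : weight n) (r : nat) : nat :=
  \sum_(j < (2 * n).-1 | r <= j) mu j.

Definition shape_sub (n : nat) (nu lam : weight n) : Prop :=
  forall r, rowlen nu r <= rowlen lam r.

(* Even shape: every column has even length. *)
Definition even_shape (n : nat) (mu : weight n) : Prop :=
  forall j : 'I_(2 * n).-1, mu j != 0 -> ~~ odd j.+1.

(* l(mu): length of the longest column (0 for mu = 0). *)
Definition longest_col (n : nat) (mu : weight n) : nat :=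
  \max_(j < (2 * n).-1 | mu j != 0) j.+1.

Definition inskew (n : nat) (lam nu : weight n) (r c : nat) : bool :=
  (c < rowlen lam r) && ~~ (c < rowlen nu r).

(* Fillings: a value 0 means "no entry"; values 1..2n are letters.
   Rows 0..2n-1, columns 0..lambda_1 - 1. *)
Definition tab (n : nat) (lam : weight n) :=
  {ffun 'I_(2 * n) * 'I_(rowlen lam 0) -> 'I_(2 * n).+1}.

Section Tableaux.
Variables (n : nat) (lam nu eta : weight n).

Local Notation Row := 'I_(2 * n).
Local Notation Col := 'I_(rowlen lam 0).

Definition entry (T : tab lam) (r : Row) (c : Col) : nat := T (r, c).

(* Exactly the boxes of lam/nu are filled (with letters from {1,..,2n});
   boxes of lam/nu lie in rows < 2n-1 and columns < lambda_1, so every box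
   of the skew shape is represented. *)
Definition is_skew_tab (T : tab lam) : bool :=
  [forall r : Row, forall c : Col, inskew lam nu r c == (entry T r c != 0)].

Definition semistandard (T : tab lam) : bool :=
  [forall r : Row, forall c : Col, forall c' : Col,
      [&& inskew lam nu r c, inskew lam nu r c' & c < c'] ==>
      (entry T r c <= entry T r c')] &&
  [forall r : Row, forall r' : Row, forall c : Col,
      [&& inskew lam nu r c, inskew lam nu r' c & r < r'] ==>
      (entry T r c < entry T r' c)].

Definition word (T : tab lam) : seq nat :=
  flatten [seq map (entry T r) (filter (fun c : Col => inskew lam nu r c) (rev (enum Col)))
          | r <- enum Row].

Definition dominant_word (w : seq nat) : bool :=
  [forall k : 'I_(size w).+1, forall i : Row,
     (0 < i) ==> (count_mem i.+1 (take k w) <= count_mem (i : nat) (take k w))].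

Definition has_weight (w : seq nat) : bool :=
  [forall i : Row, count_mem i.+1 w == rowlen eta i].

Definition isLR (T : tab lam) : bool :=
  [&& is_skew_tab T, semistandard T, dominant_word (word T)
    & has_weight (word T)].

(* Sundaram condition: for i in {0,..,l(eta)/2}, letter 2i+1 does not occur
   in any row strictly below row n+i (1-indexed), i.e. in 0-indexed rows
   r >= n+i.  (Only i < n matter, since rows are < 2n.) *)
Definition sundaram (T : tab lam) : bool :=
  [forall i : Row, (i <= (longest_col eta)./2) ==>
    [forall r : Row, forall c : Col,
       (n + i <= r) ==> (entry T r c != (i : nat).*2.+1)]].

Definition isLRS (T : tab lam) : bool := isLR T && sundaram T.

End Tableaux.

Definition LR_set (n : nat) (lam nu eta : weight n) : {set tab lam} :=
  [set T | isLR nu eta T].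
Definition LRS_set (n : nat) (lam nu eta : weight n) : {set tab lam} :=
  [set T | isLRS nu eta T].

(* Littlewood-Richardson coefficient, via the Littlewood-Richardson rule
   c^lam_{nu,eta} = |LR(lam/nu, eta)|. *)
Definition LRcoef (n : nat) (lam nu eta : weight n) : nat :=
  #|LR_set lam nu eta|.

(* Main.v *)
Require Import Defs.
From mathcomp Require Import all_boot.
From mathcomp Require Import zify.

Lemma split_ord m (x : 'I_m) : exists p1 p2, enum 'I_m = p1 ++ x :: p2 /\
  (forall y, y \in p1 -> y < x) /\ (forall y, y \in p2 -> x < y).
Proof.
have S : sorted ltn (map val (enum 'I_m)) by rewrite val_enum_ord iota_ltn_sorted.
move: S; have: x \in enum 'I_m by rewrite mem_enum.
case/splitPr=> p1 p2 S; exists p1, p2; split=> //.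
rewrite map_cat /= (sorted_pairwise ltn_trans) pairwise_cat /= in S.
case/and3P: S => A _ /andP[B _].
split=> y Hy.
  move: A => /allrelP /(_ (val y) (val x)); apply.
    by apply: map_f. by rewrite inE eqxx.
by move/allP: B => /(_ (val y)); apply; apply: map_f.
Qed.

Lemma flatten_nil (A : eqType) (B : Type) (g : A -> seq B) (s : seq A) :
  (forall x, x \in s -> g x = [::]) -> flatten (map g s) = [::].
Proof.
elim: s => //= a s IH H; rewrite H /=; last by rewrite inE eqxx.
by apply: IH => x Hx; apply: H; rewrite inE Hx orbT.
Qed.

Lemma key n (lam nu eta : weight n) (T : tab lam) (r : 'I_(2*n))
  (c : 'I_(rowlen lam 0)) :
  1 < 2*n -> isLR nu eta T -> rowlen eta 0 = rowlen eta 1 ->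
  (forall r' : 'I_(2*n), r < r' -> forall c', ~~ inskew lam nu r' c') ->
  entry T r c = 1 -> False.
Proof.
move=> h2n /and4P[Hsk Hss Hdom Hw] Heta Hemp He.
have Hin : inskew lam nu r c.
  by have := forallP (forallP Hsk r) c; rewrite He => /eqP ->.
have [p1 [p2 [Er [Hp1 Hp2]]]] := @split_ord (2*n) r.
have [q1 [q2 [Ec [Hq1 Hq2]]]] := @split_ord _ c.
set P := flatten (map (fun r0 => map (entry T r0)
            (filter (fun c0 : 'I_(rowlen lam 0) => inskew lam nu r0 c0) (rev (enum 'I_(rowlen lam 0))))) p1)
         ++ map (entry T r) (filter (fun c0 : 'I_(rowlen lam 0) => inskew lam nu r c0) (rev q2)).
set C := map (entry T r) (filter (fun c0 : 'I_(rowlen lam 0) => inskew lam nu r c0) (rev q1)).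
have Ew : word nu T = P ++ 1 :: C.
  rewrite /word Er (_ : r :: p2 = [:: r] ++ p2) // !map_cat !flatten_cat
    (@flatten_nil _ _ _ p2).
    rewrite cats0 /P /C -catA; congr (_ ++ _); rewrite /= cats0.
    by rewrite Ec rev_cat rev_cons cat_rcons filter_cat /= Hin map_cat /= He.
  move=> x Hx.
  have Hrx := Hp2 _ Hx.
  elim: (rev _) => //= a s IH; by rewrite (negbTE (Hemp _ Hrx a)).
have HC : count_mem 2 C = 0.
  apply/count_memPn/mapP => -[c' Hc' He'].
  rewrite mem_filter mem_rev in Hc'; case/andP: Hc' => Hin' Hc'.
  have Hlt := Hq1 _ Hc'.
  move: Hss => /andP[/forallP /(_ r) /forallP /(_ c') /forallP /(_ c) H _].
  by move: H; rewrite Hin' Hin Hlt /= He -He'.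
have hk : size P < (size (word nu T)).+1 by rewrite Ew size_cat /=; lia.
have h1 : 1 < 2 * n by [].
have h0 : 0 < 2 * n by lia.
move/forallP: Hdom => /(_ (Ordinal hk)) /forallP /(_ (Ordinal h1)) /=.
rewrite Ew take_size_cat //.
move/forallP: Hw => Hw.
move: (Hw (Ordinal h0)) (Hw (Ordinal h1)) => /= /eqP H1 /eqP H2.
move: H1 H2; rewrite Ew !count_cat /= HC Heta => H1 H2.
lia.
Qed.

Lemma rowlen0 n (lam : weight n) a1 a2 a3 (r : nat) :
  (forall j : 'I_(2 * n).-1,
     lam j = if val j == 0 then a1 else if val j == 1 then a2
             else if val j == 2 then a3 else 0) ->
  3 <= r -> rowlen lam r = 0.
Proof.
move=> hlam hr; rewrite /rowlen big1 // => j hj; rewrite hlam.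
have: 3 <= val j by apply: leq_trans hj.
by case: (val j) => [|[|[|]]].
Qed.

Theorem lemma6p4 (n : nat) (a1 a2 a3 : nat) (lam nu eta : weight n) :
  2 <= n ->
  (forall j : 'I_(2 * n).-1,
     lam j = if val j == 0 then a1 else if val j == 1 then a2
             else if val j == 2 then a3 else 0) ->
  shape_sub nu lam -> shape_sub eta lam -> even_shape eta ->
  #|LRS_set lam nu eta| = LRcoef lam nu eta.
Proof.
move=> hn hlam _ _ hev.
have Heta : rowlen eta 0 = rowlen eta 1.
  rewrite /rowlen (bigID (fun j : 'I_(2 * n).-1 => 1 <= j)) /= [X in _ + X]big1.
    by rewrite addn0; apply: eq_bigl => j; rewrite ?leq0n.
  move=> j hj; apply/eqP; apply/negPn/negP => /hev.
  by move: hj; rewrite lt0n negbK => /eqP ->.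
rewrite /LRcoef; apply: eq_card => T; rewrite !inE /isLRS.
case HLR: (isLR nu eta T) => //=.
apply/forallP => i; apply/implyP => _; apply/forallP => r; apply/forallP => c.
apply/implyP => hr; apply/negP => /eqP he.
have Hsk := HLR; case/and4P: Hsk => Hsk _ _ _.
have Hemp : forall (r' : 'I_(2*n)) c', 3 <= r' -> ~~ inskew lam nu r' c'.
  move=> r' c' h3; rewrite /inskew (@rowlen0 n lam a1 a2 a3 r' hlam h3) //.
case: (leqP 3 r) => h3.
  move/forallP: Hsk => /(_ r) /forallP /(_ c) /eqP.
  by rewrite he (negbTE (Hemp _ _ h3)).
have hi : (i : nat) = 0 by lia.
rewrite hi /= in he.
apply: (@key n lam nu eta T r c _ HLR Heta) => //; first by lia.
by move=> r' hr' c'; apply: Hemp; lia.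
Qed.
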